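(* Let $\big(m_{i,j}^{s,t}\big)_{i,j,s,t\ge 0}$ and $\big(\phi_i^{s,t}\big)_{i,s,t\ge0}$ be real numbers with $m_{i,j}^{s,t}=m_{j,i}^{s,t}$ for all $i,j,s,t$, satisfying $$m_{i,j}^{s+1,t}=m_{i+1,j+1}^{s,t},\qquad m_{i,j}^{s,t+1}=m_{i,j}^{s,t}-\phi_i^{s,t}\phi_j^{s,t},\qquad \phi_i^{s+1,t}=\phi_{i+1}^{s,t}$$ for all $i,j,s,t\ge 0$. Put $\tau_n^{s,t}=\det\big(m_{i,j}^{s,t}\big)_{i,j=0}^{n-1}$ for $n\ge1$ and $\tau_0^{s,t}=1$. Then for all $n\ge 1$ and $s,t\ge 0$, $$ \begin{aligned} &4\left(\tau_{n}^{s+1,t}\tau_n^{s,t}-\tau_{n+1}^{s,t}\tau_{n-1}^{s+1,t}\right)\left(\tau_n^{s+1,t+1}\tau_n^{s,t+1}-\tau_{n+1}^{s,t+1}\tau_{n-1}^{s+1,t+1}\right)\\ &\qquad=\left(\tau_n^{s+1,t}\tau_n^{s,t+1}+\tau_n^{s+1,t+1}\tau_n^{s,t}-\tau_{n+1}^{s,t+1}\tau_{n-1}^{s+1,t}-\tau_{n+1}^{s,t}\tau_{n-1}^{s+1,t+1}\right)^2. \end{aligned} $$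
   Context: The displayed quartic equation is the discrete CKP equation. The empty determinant $\tau_0^{s,t}$ equals $1$. *)

(* Defs.v *)
From mathcomp Require Import all_boot all_order all_algebra.
From mathcomp Require Import reals.
Set Implicit Arguments. Unset Strict Implicit. Unset Printing Implicit Defensive.
Import GRing.Theory Num.Theory.
Local Open Scope ring_scope.

(* tau m n s t = det (m i j s t)_{i,j=0}^{n-1}; for n = 0 this is the
   determinant of the empty 0x0 matrix, which is 1 in MathComp. *)
Definition tau (R : realType) (m : nat -> nat -> nat -> nat -> R)
  (n s t : nat) : R :=
  \det (\matrix_(i < n, j < n) m i j s t).

(* Main.v *)
Require Import Defs.
From mathcomp Require Import all_boot all_order all_algebra.
From mathcomp Require Import reals.
From mathcomp Require Import fingroup perm fraction mxpoly ring zify.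
From Stdlib Require Import FunctionalExtensionality.
Set Implicit Arguments. Unset Strict Implicit. Unset Printing Implicit Defensive.
Import GRing.Theory Num.Theory.
Local Open Scope ring_scope.

Definition Dt (R : comNzRingType) N (f : nat -> nat -> R) :=
  \det (\matrix_(i < N, j < N) f i j).

Definition Idexpr (R : comNzRingType) (a : nat -> nat -> R) (p : nat -> R) (k : nat) : R :=
  let b := fun i j => a i j - p i * p j in
  let t0 := Dt k.+1 a in
  let t1 := Dt k.+1 (fun i j => a i.+1 j.+1) in
  let t2 := Dt k.+2 a in
  let t3 := Dt k (fun i j => a i.+1 j.+1) in
  let u0 := Dt k.+1 b in
  let u1 := Dt k.+1 (fun i j => b i.+1 j.+1) in
  let u2 := Dt k.+2 b in
  let u3 := Dt k (fun i j => b i.+1 j.+1) in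
  4 * (t1 * t0 - t2 * t3) * (u1 * u0 - u2 * u3)
  - (t1 * u0 + u1 * t0 - u2 * t3 - t2 * u3) ^+ 2.

Section Gen.
Variable F : fieldType.

Lemma schurA p k (D : 'M[F]_p) (C : 'M[F]_(p, k)) (B : 'M[F]_(k, p)) (A : 'M[F]_k) :
  A \in unitmx -> \det (block_mx D C B A) = \det A * \det (D - C *m invmx A *m B).
Proof.
move=> uA.
have -> : block_mx D C B A = block_mx 1%:M (C *m invmx A) 0 1%:M *m
   block_mx (D - C *m invmx A *m B) 0 B A.
  rewrite mulmx_block !mul1mx !mul0mx ?mulmx0 ?add0r ?addr0 -[C *m invmx A *m A]mulmxA mulVmx //.
  by rewrite mulmx1 subrK.
by rewrite (@det_mulmx _ (p + k)) det_ublock det_lblock !det1 !mul1r mulrC.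
Qed.

Lemma schurD p k (D : 'M[F]_p) (C : 'M[F]_(p, k)) (B : 'M[F]_(k, p)) (A : 'M[F]_k) :
  D \in unitmx -> \det (block_mx D C B A) = \det D * \det (A - B *m invmx D *m C).
Proof.
move=> uD.
have -> : block_mx D C B A = block_mx D 0 B 1%:M *m
   block_mx 1%:M (invmx D *m C) 0 (A - B *m invmx D *m C).
  rewrite mulmx_block ?mul1mx ?mul0mx ?mulmx1 ?mulmx0 ?add0r ?addr0 mulmxA mulmxV //.
  by rewrite mul1mx mulmxA addrC subrK.
by rewrite (@det_mulmx _ (p + k)) det_ublock det_lblock !det1 !mul1r !mulr1.
Qed.

Lemma det_reindex N (f : nat -> nat -> F) (s : nat -> nat) :
  (forall i, (i < N)%N -> (s i < N)%N) ->
  (forall i j, (i < N)%N -> (j < N)%N -> s i = s j -> i = j) ->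
  \det (\matrix_(i < N, j < N) f (s i) (s j)) = \det (\matrix_(i < N, j < N) f i j).
Proof.
move=> Hs Hinj.
pose so (i : 'I_N) : 'I_N := Ordinal (Hs i (ltn_ord i)).
have soi : injective so.
  by move=> i j [] /(Hinj _ _ (ltn_ord i) (ltn_ord j)) /val_inj.
pose sp := perm soi.
have -> : \matrix_(i < N, j < N) f (s i) (s j) =
   col_perm sp (row_perm sp (\matrix_(i < N, j < N) f i j)).
  by apply/matrixP => i j; rewrite !mxE !permE.
rewrite col_permE row_permE !det_mulmx !det_perm odd_permV.
by rewrite mulrC mulrA -expr2 sqrr_sign mul1r.
Qed.

Lemma block_eq p k (f : nat -> nat -> F) (r : nat -> nat) (lab : 'I_p -> 'I_3)
  (E : 'M[F]_3) (W : 'M[F]_(3, k)) (A : 'M[F]_k) :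
  (forall x y, f x y = f y x) ->
  (forall i j : 'I_p, f (r i) (r j) = E (lab i) (lab j)) ->
  (forall (i : 'I_p) (j : 'I_k), f (r i) (r (p + j)%N) = W (lab i) j) ->
  (forall i j : 'I_k, f (r (p + i)%N) (r (p + j)%N) = A i j) ->
  \matrix_(i < p + k, j < p + k) f (r i) (r j) =
    block_mx (mxsub lab lab E) (rowsub lab W) (rowsub lab W)^T A.
Proof.
move=> fs HE HW HA; apply/matrixP => i j.
rewrite -(splitK i) -(splitK j).
case: (split i) => i'; case: (split j) => j';
  rewrite ?block_mxEul ?block_mxEur ?block_mxEdl ?block_mxEdr !mxE /=.
- exact: HE.
- exact: HW.
- by rewrite fs HW.
- exact: HA.
Qed.

Definition border (a : nat -> nat -> F) (p : nat -> F) (i j : nat) : F :=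
  match i, j with
  | 0, 0 => 1
  | 0, j'.+1 => p j'
  | i'.+1, 0 => p i'
  | i'.+1, j'.+1 => a i' j'
  end.

Lemma border_det N a p :
  \det (\matrix_(i < 1 + N, j < 1 + N) border a p i j) =
  \det (\matrix_(i < N, j < N) (a i j - p i * p j)).
Proof.
have -> : \matrix_(i < 1 + N, j < 1 + N) border a p i j =
  block_mx (1%:M : 'M_1) (\row_(j < N) p j) (\col_(i < N) p i) (\matrix_(i < N, j < N) a i j).
  apply/matrixP => i j; rewrite -(splitK i) -(splitK j).
  case: (split i) => i'; case: (split j) => j';
    rewrite ?block_mxEul ?block_mxEur ?block_mxEdl ?block_mxEdr !mxE /= ?ord1 //.
rewrite schurD ?unitmx1 // det1 mul1r invmx1 mulmx1.
congr (\det _); apply/matrixP => i j; rewrite !mxE big_ord1 !mxE.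
done.
Qed.
Lemma det2 (g : nat -> nat -> F) : \det (\matrix_(i < 2, j < 2) g i j) = g 0 0 * g 1 1 - g 0 1 * g 1 0.
Proof.
rewrite (expand_det_row _ 0) !big_ord_recl big_ord0 /cofactor !det_mx11 !mxE /=.
rewrite /bump /=. ring.
Qed.
Lemma det3 (g : nat -> nat -> F) : \det (\matrix_(i < 3, j < 3) g i j) =
  g 0 0 * (g 1 1 * g 2 2 - g 1 2 * g 2 1) - g 0 1 * (g 1 0 * g 2 2 - g 1 2 * g 2 0)
  + g 0 2 * (g 1 0 * g 2 1 - g 1 1 * g 2 0).
Proof.
rewrite (expand_det_row _ 0) !big_ord_recl big_ord0 /cofactor !mxE /=.
rewrite !(expand_det_row _ 0) !big_ord_recl !big_ord0 /cofactor !det_mx11 !mxE /=.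
rewrite /bump /=. ring.
Qed.

Definition rot (q N i : nat) : nat :=
  if (i < q)%N then i else if i == q then N.-1 else i.-1.

Lemma rot_lt q N i : (q < N)%N -> (i < N)%N -> (rot q N i < N)%N.
Proof.
rewrite /rot => hq hi; repeat case: ifP => ?; lia.
Qed.

Lemma rot_inj q N i j : (q < N)%N -> (i < N)%N -> (j < N)%N ->
  rot q N i = rot q N j -> i = j.
Proof.
rewrite /rot => hq hi hj.
repeat case: ifP => ?; lia.
Qed.


Lemma Dt_rot q N (f : nat -> nat -> F) : (q < N)%N ->
  Dt N f = \det (\matrix_(i < N, j < N) f (rot q N i) (rot q N j)).
Proof.
move=> hq; rewrite /Dt det_reindex //.
  by move=> i; apply: rot_lt.
by move=> i j; apply: rot_inj.
Qed.


Section Main.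
Variables (a : nat -> nat -> F) (p : nat -> F) (k : nat).
Hypothesis asym : forall i j, a i j = a j i.

Definition ev (x : nat) : nat := match x with 0 => 0 | 1 => 1 | _ => k.+2 end.
Definition Bd := border a p.
Definition Am : 'M[F]_k := \matrix_(i < k, j < k) Bd i.+2 j.+2.
Definition Wm : 'M[F]_(3, k) := \matrix_(x < 3, j < k) Bd (ev x) j.+2.
Definition Em : 'M[F]_3 := \matrix_(x < 3, y < 3) Bd (ev x) (ev y).
Definition Sm : 'M[F]_3 := Em - Wm *m invmx Am *m Wm^T.

Lemma border_sym (b : nat -> nat -> F) q : (forall i j, b i j = b j i) ->
  forall i j, border b q i j = border b q j i.
Proof. by move=> bs [|i] [|j] //=. Qed.

Lemma Bd_sym i j : Bd i j = Bd j i.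
Proof. exact: border_sym. Qed.

Lemma Am_sym : Am^T = Am.
Proof. by apply/matrixP => i j; rewrite !mxE Bd_sym. Qed.

Lemma Sm_sym x y : Sm x y = Sm y x.
Proof.
have : Sm^T = Sm.
  rewrite /Sm linearB /= !trmx_mul trmxK trmx_inv Am_sym mulmxA.
  by congr (_ - _); apply/matrixP => i j; rewrite !mxE Bd_sym.
by move/matrixP/(_ y x); rewrite mxE.
Qed.

Lemma minor_eq q (lab : 'I_q -> 'I_3) : Am \in unitmx ->
  \det (block_mx (mxsub lab lab Em) (rowsub lab Wm) (rowsub lab Wm)^T Am) =
  \det Am * \det (mxsub lab lab Sm).
Proof.
move=> uA; rewrite schurA //; congr (_ * \det _).
apply/matrixP => i j; rewrite !mxE; congr (_ - _).
apply: eq_bigr => l _; rewrite !mxE; congr (_ * _).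
by apply: eq_bigr => m _; rewrite !mxE.
Qed.


Definition o0 : 'I_3 := @Ordinal 3 0 isT.
Definition o1 : 'I_3 := @Ordinal 3 1 isT.
Definition o2 : 'I_3 := @Ordinal 3 2 isT.
Definition labl (l : seq 'I_3) q (i : 'I_q) : 'I_3 := nth o0 l i.

Lemma case_gen q (f : nat -> nat -> F) (r : nat -> nat) (l : seq 'I_3) : Am \in unitmx ->
  (forall x y, f x y = f y x) ->
  (forall i j : 'I_q, f (r i) (r j) = Em (labl l i) (labl l j)) ->
  (forall (i : 'I_q) (j : 'I_k), f (r i) (r (q + j)%N) = Wm (labl l i) j) ->
  (forall i j : 'I_k, f (r (q + i)%N) (r (q + j)%N) = Am i j) ->
  \det (\matrix_(i < q + k, j < q + k) f (r i) (r j)) =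
  \det Am * \det (\matrix_(i < q, j < q) Sm (nth o0 l i) (nth o0 l j)).
Proof.
move=> uA fs HE HW HA; rewrite (block_eq fs HE HW HA) minor_eq //.
Qed.

Lemma t2_eq : Am \in unitmx -> Dt k.+2 a =
  \det Am * \det (\matrix_(i < 2, j < 2) Sm (nth o0 [:: o1; o2] i) (nth o0 [:: o1; o2] j)).
Proof.
move=> uA; rewrite (@Dt_rot 1) //.
apply: (@case_gen 2) => //.
- by move=> [[|[|i]] Hi] [[|[|j]] Hj] //=; rewrite ?mxE /rot /=.
- by move=> [[|[|i]] Hi] j //=; rewrite ?mxE /rot /=.
- by move=> i j; rewrite ?mxE /rot /=.
Qed.

Lemma t0_eq : Am \in unitmx -> Dt k.+1 a =
  \det Am * \det (\matrix_(i < 1, j < 1) Sm (nth o0 [:: o1] i) (nth o0 [:: o1] j)).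
Proof.
move=> uA; apply: (@case_gen 1 a (fun i => i)) => //.
- by move=> [[|i] Hi] [[|j] Hj] //=; rewrite ?mxE /=.
- by move=> [[|i] Hi] j //=; rewrite ?mxE /=.
- by move=> i j; rewrite ?mxE /=.
Qed.

Lemma t1_eq : Am \in unitmx -> Dt k.+1 (fun i j => a i.+1 j.+1) =
  \det Am * \det (\matrix_(i < 1, j < 1) Sm (nth o0 [:: o2] i) (nth o0 [:: o2] j)).
Proof.
move=> uA; rewrite (@Dt_rot 0) //.
apply: (@case_gen 1 (fun i j => a i.+1 j.+1) (rot 0 k.+1)) => //.
- by move=> [[|i] Hi] [[|j] Hj] //=; rewrite ?mxE /rot /=.
- by move=> [[|i] Hi] j //=; rewrite ?mxE /rot /=.
- by move=> i j; rewrite ?mxE /rot /=.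
Qed.

Lemma t3_eq : Dt k (fun i j => a i.+1 j.+1) = \det Am.
Proof. by rewrite /Dt; congr (\det _); apply/matrixP => i j; rewrite !mxE. Qed.

Lemma t0p_eq : Am \in unitmx -> Dt k.+1 (fun i j => a i j - p i * p j) =
  \det Am * \det (\matrix_(i < 2, j < 2) Sm (nth o0 [:: o0; o1] i) (nth o0 [:: o0; o1] j)).
Proof.
move=> uA; rewrite /Dt -border_det.
apply: (@case_gen 2 (border a p) (fun i => i)) => //.
- exact: border_sym.
- by move=> [[|[|i]] Hi] [[|[|j]] Hj] //=; rewrite ?mxE /=.
- by move=> [[|[|i]] Hi] j //=; rewrite ?mxE /=.
- by move=> i j; rewrite ?mxE /=.
Qed.

Lemma t1p_eq : Am \in unitmx -> Dt k.+1 (fun i j => a i.+1 j.+1 - p i.+1 * p j.+1) =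
  \det Am * \det (\matrix_(i < 2, j < 2) Sm (nth o0 [:: o0; o2] i) (nth o0 [:: o0; o2] j)).
Proof.
move=> uA; rewrite /Dt -(@border_det k.+1 (fun i j => a i.+1 j.+1) (fun i => p i.+1)).
change (Dt k.+2 (border (fun i j => a i.+1 j.+1) (fun i => p i.+1)) = 
  \det Am * \det (\matrix_(i < 2, j < 2) Sm (nth o0 [:: o0; o2] i) (nth o0 [:: o0; o2] j))).
rewrite (@Dt_rot 1) //.
apply: (@case_gen 2 (border (fun i j => a i.+1 j.+1) (fun i => p i.+1)) (rot 1 k.+2)) => //.
- by apply: border_sym => x y; rewrite asym.
- by move=> [[|[|i]] Hi] [[|[|j]] Hj] //=; rewrite ?mxE /rot /=.
- by move=> [[|[|i]] Hi] j //=; rewrite ?mxE /rot /=.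
- by move=> i j; rewrite ?mxE /rot /=.
Qed.

Lemma t2p_eq : Am \in unitmx -> Dt k.+2 (fun i j => a i j - p i * p j) =
  \det Am * \det (\matrix_(i < 3, j < 3) Sm (nth o0 [:: o0; o1; o2] i) (nth o0 [:: o0; o1; o2] j)).
Proof.
move=> uA; rewrite /Dt -border_det.
change (Dt k.+3 (border a p) = 
  \det Am * \det (\matrix_(i < 3, j < 3) Sm (nth o0 [:: o0; o1; o2] i) (nth o0 [:: o0; o1; o2] j))).
rewrite (@Dt_rot 2) //.
apply: (@case_gen 3 (border a p) (rot 2 k.+3)) => //.
- exact: border_sym.
- by move=> [[|[|[|i]]] Hi] [[|[|[|j]]] Hj] //=; rewrite ?mxE /rot /=.
- by move=> [[|[|[|i]]] Hi] j //=; rewrite ?mxE /rot /=.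
- by move=> i j; rewrite ?mxE /rot /=.
Qed.

Lemma t3p_eq : Am \in unitmx -> Dt k (fun i j => a i.+1 j.+1 - p i.+1 * p j.+1) =
  \det Am * \det (\matrix_(i < 1, j < 1) Sm (nth o0 [:: o0] i) (nth o0 [:: o0] j)).
Proof.
move=> uA; rewrite /Dt -(@border_det k (fun i j => a i.+1 j.+1) (fun i => p i.+1)).
apply: (@case_gen 1 (border (fun i j => a i.+1 j.+1) (fun i => p i.+1)) (fun i => i)) => //.
- by apply: border_sym => x y; rewrite asym.
- by move=> [[|i] Hi] [[|j] Hj] //=; rewrite ?mxE /=.
- by move=> [[|i] Hi] j //=; rewrite ?mxE /=.
- by move=> i j; rewrite ?mxE /=.
Qed.

Lemma detS1 l : \det (\matrix_(i < 1, j < 1) Sm (nth o0 l i) (nth o0 l j)) =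
  Sm (nth o0 l 0) (nth o0 l 0).
Proof. by rewrite det_mx11 mxE. Qed.
Lemma detS2 l : \det (\matrix_(i < 2, j < 2) Sm (nth o0 l i) (nth o0 l j)) =
  let g := fun i j => Sm (nth o0 l i) (nth o0 l j) in g 0 0 * g 1 1 - g 0 1 * g 1 0.
Proof. exact: (det2 (fun i j => Sm (nth o0 l i) (nth o0 l j))). Qed.
Lemma detS3 l : \det (\matrix_(i < 3, j < 3) Sm (nth o0 l i) (nth o0 l j)) =
  let g := fun i j => Sm (nth o0 l i) (nth o0 l j) in
  g 0 0 * (g 1 1 * g 2 2 - g 1 2 * g 2 1) - g 0 1 * (g 1 0 * g 2 2 - g 1 2 * g 2 0)
  + g 0 2 * (g 1 0 * g 2 1 - g 1 1 * g 2 0).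
Proof. exact: (det3 (fun i j => Sm (nth o0 l i) (nth o0 l j))). Qed.

Lemma main_field : Am \in unitmx -> Idexpr a p k = 0.
Proof.
move=> uA; rewrite /Idexpr /=.
rewrite t0_eq // t1_eq // t3_eq t2_eq // t0p_eq // t1p_eq // t2p_eq // t3p_eq //.
rewrite !detS1 !detS2 !detS3 /=.
rewrite (Sm_sym o1 o0) (Sm_sym o2 o0) (Sm_sym o2 o1).
ring.
Qed.

End Main.
End Gen.

Lemma Dt_ext (R : comNzRingType) N (f g : nat -> nat -> R) :
  (forall i j, f i j = g i j) -> Dt N f = Dt N g.
Proof. by move=> h; rewrite /Dt; congr (\det _); apply/matrixP => i j; rewrite !mxE h. Qed.

Lemma Dt_morph (R1 R2 : comNzRingType) (phi : {rmorphism R1 -> R2}) N (f : nat -> nat -> R1) :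
  phi (Dt N f) = Dt N (fun i j => phi (f i j)).
Proof.
rewrite /Dt -det_map_mx; congr (\det _); apply/matrixP => i j; by rewrite !mxE.
Qed.

Lemma Idexpr_morph (R1 R2 : comNzRingType) (phi : {rmorphism R1 -> R2}) a p k :
  phi (Idexpr a p k) = Idexpr (fun i j => phi (a i j)) (fun i => phi (p i)) k.
Proof.
rewrite /Idexpr /= !(rmorphB, rmorphM, rmorphD, rmorphXn, rmorph_nat) !Dt_morph.
have E1 : forall N, Dt N (fun i j => phi (a i j - p i * p j)) =
   Dt N (fun i j => phi (a i j) - phi (p i) * phi (p j)).
  by move=> N; apply: Dt_ext => i j; rewrite rmorphB rmorphM.
have E2 : forall N, Dt N (fun i j => phi (a i.+1 j.+1 - p i.+1 * p j.+1)) =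
   Dt N (fun i j => phi (a i.+1 j.+1) - phi (p i.+1) * phi (p j.+1)).
  by move=> N; apply: Dt_ext => i j; rewrite rmorphB rmorphM.
by rewrite !E1 !E2.
Qed.

Lemma Idexpr0 (F : fieldType) (a : nat -> nat -> F) (p : nat -> F) k :
  (forall i j, a i j = a j i) -> Idexpr a p k = 0.
Proof.
move=> asym.
pose aP (i j : nat) : {poly F} :=
  (a i j)%:P + (if (i == j) && (0 < i <= k)%N then 'X else 0).
pose pP (i : nat) : {poly F} := (p i)%:P.
have aPs : forall i j, aP i j = aP j i.
  by move=> i j; rewrite /aP asym; case: (eqVneq i j) => [->|] //; rewrite eq_sym => /negPf ->.
have key : Idexpr aP pP k = 0.
  apply/eqP; rewrite -(tofrac_eq0 (Idexpr aP pP k)) Idexpr_morph.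
  apply/eqP; apply: main_field.
    by move=> i j; rewrite aPs.
  rewrite unitmxE unitfE.
  have -> : Am (fun i j => tofrac (aP i j)) (fun i => tofrac (pP i)) k =
     map_mx (@tofrac _) (char_poly_mx (- \matrix_(i < k, j < k) a i.+1 j.+1)).
    apply/matrixP => i j; rewrite !mxE /=.
    have hp : aP i.+1 j.+1 = 'X *+ (i == j) - (- a i.+1 j.+1)%:P.
      rewrite /aP /= ltn_ord andbT polyCN opprK.
      rewrite (_ : (i.+1 == j.+1) = (i == j)) //.
      by case: (i == j); rewrite /= ?mulr1n ?mulr0n ?addr0 ?add0r // addrC.
    by rewrite -hp.
  rewrite det_map_mx tofrac_eq0.
  exact: monic_neq0 (char_poly_monic _).
have := congr1 (horner_eval 0) key.
rewrite Idexpr_morph rmorph0.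
have -> : (fun i j => horner_eval 0 (aP i j)) = a.
  apply: functional_extensionality => i; apply: functional_extensionality => j.
  by rewrite horner_evalE /aP hornerD hornerC; case: ifP; rewrite ?hornerX ?horner0 addr0.
have -> : (fun i => horner_eval 0 (pP i)) = p.
  by apply: functional_extensionality => i; rewrite horner_evalE /pP hornerC.
done.
Qed.

Unset Implicit Arguments.

Theorem corollary3p5 (R : realType)
  (m : nat -> nat -> nat -> nat -> R) (phi : nat -> nat -> nat -> R)
  (msym : forall i j s t, m i j s t = m j i s t)
  (hs : forall i j s t, m i j s.+1 t = m i.+1 j.+1 s t)
  (ht : forall i j s t, m i j s t.+1 = m i j s t - phi i s t * phi j s t)
  (hphi : forall i s t, phi i s.+1 t = phi i.+1 s t)
  (n s t : nat) : (1 <= n)%N ->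
  4 * (tau m n s.+1 t * tau m n s t - tau m n.+1 s t * tau m n.-1 s.+1 t)
    * (tau m n s.+1 t.+1 * tau m n s t.+1
       - tau m n.+1 s t.+1 * tau m n.-1 s.+1 t.+1)
  = (tau m n s.+1 t * tau m n s t.+1 + tau m n s.+1 t.+1 * tau m n s t
     - tau m n.+1 s t.+1 * tau m n.-1 s.+1 t
     - tau m n.+1 s t * tau m n.-1 s.+1 t.+1) ^+ 2.
Proof.
case: n => [//|k] _.
pose a := fun i j => m i j s t.
pose ph := fun i => phi i s t.
have key := @Idexpr0 R a ph k (fun i j => msym i j s t).
rewrite /Idexpr /= in key.
have e0 : tau m k.+1 s t = Dt k.+1 a by [].
have e2 : tau m k.+2 s t = Dt k.+2 a by [].
have e1 : forall N, tau m N s.+1 t = Dt N (fun i j => a i.+1 j.+1).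
  by move=> N; rewrite /tau /Dt; congr (\det _); apply/matrixP => i j; rewrite !mxE hs.
have u0 : forall N, tau m N s t.+1 = Dt N (fun i j => a i j - ph i * ph j).
  by move=> N; rewrite /tau /Dt; congr (\det _); apply/matrixP => i j; rewrite !mxE ht.
have u1 : forall N, tau m N s.+1 t.+1 =
    Dt N (fun i j => a i.+1 j.+1 - ph i.+1 * ph j.+1).
  by move=> N; rewrite /tau /Dt; congr (\det _); apply/matrixP => i j;
    rewrite !mxE ht hs !hphi.
change (k.+1.-1) with k.
rewrite !e1 !u0 !u1 e0 e2.
by apply/eqP; rewrite -subr_eq0 key.
Qed.
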